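(* Suppose $t=t(n)=\alpha_0(n)+O(1)$ is an integer. Then, uniformly over all $n$ and all real $\rho\ge2$ with $t-\rho=\Theta(1)$, \[ y_t(\rho)=2\log n-\log\log n+O(1). \]
   Context: $\alpha_0(n)=2\log_2 n-2\log_2\log_2 n+2\log_2(e/2)+1$. $d_i=2^{\binom i2}i!$. For positive integer $t$ and real $1<\rho<t$, $x_t(\rho),y_t(\rho)$ are the unique reals $x,y$ with $\sum_{i=1}^t e^{x+iy}d_i^{-1}=1$ and $\sum_{i=1}^t ie^{x+iy}d_i^{-1}=\rho$. Logarithms are natural. *)

(* Defs.v *)
From Stdlib Require Import Reals Lra Lia ClassicalEpsilon Factorial.
Open Scope R_scope.

Fixpoint sum1 (f : nat -> R) (t : nat) : R :=
  match t with
  | O => 0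
  | S k => sum1 f k + f (S k)
  end.

Definition log2 (x : R) : R := ln x / ln 2.

Definition alpha0 (n : R) : R :=
  2 * log2 n - 2 * log2 (log2 n) + 2 * log2 (exp 1 / 2) + 1.

(* d_i = 2^{binom(i,2)} i!   (binom(i,2) = i(i-1)/2, exact division) *)
Definition d (i : nat) : R := 2 ^ (Nat.div (i * (i - 1)) 2) * INR (fact i).

Definition xy_spec (t : nat) (rho : R) (p : R * R) : Prop :=
  sum1 (fun i => exp (fst p + INR i * snd p) / d i) t = 1 /\
  sum1 (fun i => INR i * exp (fst p + INR i * snd p) / d i) t = rho.

(* The (unique, for 1 < rho < t) solution, chosen via Hilbert's epsilon. *)
Definition xy (t : nat) (rho : R) : R * R :=
  epsilon (inhabits (0, 0)) (xy_spec t rho).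

Definition x_t (t : nat) (rho : R) : R := fst (xy t rho).
Definition y_t (t : nat) (rho : R) : R := snd (xy t rho).

(* Main.v *)
Require Import Defs.
From Stdlib Require Import Reals Lra Lia Psatz ClassicalEpsilon Factorial ZArith.
Open Scope R_scope.

Lemma sum1_ext f g t : (forall i, (1 <= i <= t)%nat -> f i = g i) -> sum1 f t = sum1 g t.
Proof.
  induction t; intros H; simpl; auto.
  rewrite IHt by (intros; apply H; lia). rewrite H by lia. reflexivity.
Qed.

Lemma sum1_scal c f t : sum1 (fun i => c * f i) t = c * sum1 f t.
Proof. induction t; simpl; [ring|]. rewrite IHt; ring. Qed.

Lemma sum1_nonneg f t : (forall i, 0 <= f i) -> 0 <= sum1 f t.
Proof. intros H; induction t; simpl; [lra|]. specialize (H (S t)); lra. Qed.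

Lemma sum1_ge_last f t : (forall i, 0 <= f i) -> (1 <= t)%nat -> f t <= sum1 f t.
Proof.
  intros H Ht. destruct t as [|t]; [lia|]. simpl.
  pose proof (sum1_nonneg f t H). lra.
Qed.

Lemma d_pos i : 0 < d i.
Proof.
  unfold d. apply Rmult_lt_0_compat. apply pow_lt; lra.
  apply lt_0_INR. apply lt_O_fact.
Qed.

Lemma d_succ i : d (S i) = d i * 2 ^ i * INR (S i).
Proof.
  unfold d.
  replace (S i * (S i - 1))%nat with (i * (i - 1) + i * 2)%nat
    by (destruct i; simpl; nia).
  rewrite Nat.div_add by lia. rewrite pow_add.
  rewrite fact_simpl, mult_INR. ring.
Qed.

Definition w (y : R) (i : nat) : R := exp (INR i * y) / d i.

Lemma w_pos y i : 0 < w y i.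
Proof. unfold w. apply Rdiv_lt_0_compat. apply exp_pos. apply d_pos. Qed.

Lemma w_succ y i : w y (S i) = w y i * (exp y / (2 ^ i * INR (S i))).
Proof.
  unfold w. rewrite d_succ.
  replace (INR (S i) * y) with (INR i * y + y) by (rewrite S_INR; ring).
  rewrite exp_plus.
  pose proof (d_pos i). assert (0 < 2 ^ i) by (apply pow_lt; lra).
  assert (0 < INR (S i)) by (apply lt_0_INR; lia).
  field. lra.
Qed.

Lemma G1 (f : nat -> R) (R0 : R) : 1 < R0 -> (forall i, 0 < f i) ->
  forall m, (forall i, (1 <= i < m)%nat -> R0 * f i <= f (S i)) ->
  (R0 - 1) * sum1 f m <= R0 * f m /\
  (R0 - 1) * (INR m * sum1 f m - sum1 (fun i => INR i * f i) m) <= sum1 f m.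
Proof.
  intros HR Hf m. induction m as [|m IH]; intros H.
  - simpl. specialize (Hf 0%nat). split; nra.
  - destruct IH as [IH1 IH2]. { intros i Hi. apply H. lia. }
    simpl sum1. rewrite S_INR.
    assert (Hs : 0 <= sum1 f m).
    { clear -Hf. induction m; simpl; [lra|]. specialize (Hf (S m)). lra. }
    destruct m as [|m'].
    + simpl in *. specialize (Hf 1%nat). split; nra.
    + assert (Hm : R0 * f (S m') <= f (S (S m'))) by (apply H; lia).
      set (m := S m') in *.
      set (S0 := sum1 f m) in *. set (M0 := sum1 (fun i => INR i * f i) m) in *.
      split.
      * nra.
      * replace ((INR m + 1) * (S0 + f (S m)) - (M0 + INR (S m) * f (S m)))
          with ((INR m * S0 - M0) + S0) by (rewrite S_INR; ring).
        nra.
Qed.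

Lemma sum1_M_le (f : nat -> R) : (forall i, 0 <= f i) -> forall m,
  sum1 (fun i => INR i * f i) m <= INR m * sum1 f m.
Proof.
  intros Hf m. induction m; simpl; [lra|].
  assert (Hs : 0 <= sum1 f m).
  { clear -Hf. induction m; simpl; [lra|]. specialize (Hf (S m)). lra. }
  specialize (Hf (S m)). pose proof (pos_INR m). destruct m; simpl in *; nra.
Qed.

Lemma G2 (f : nat -> R) (eps : R) (K : nat) : 0 < eps < 1 -> (forall i, 0 < f i) ->
  forall dd, (forall i, (K <= i < K + dd)%nat -> f (S i) <= eps * f i) ->
  0 <= sum1 f (K + dd)%nat - sum1 f K /\
  (1 - eps) * (sum1 f (K + dd)%nat - sum1 f K) + eps * f (K + dd)%nat <= eps * f K /\
  sum1 (fun i => INR i * f i) (K + dd)%nat - sum1 (fun i => INR i * f i) K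
     <= INR (K + dd)%nat * (sum1 f (K + dd)%nat - sum1 f K).
Proof.
  intros He Hf dd. induction dd as [|dd IH]; intros H.
  - rewrite Nat.add_0_r. split; [lra|split; lra].
  - destruct IH as [I1 [I2 I3]]. { intros i Hi; apply H; lia. }
    replace (K + S dd)%nat with (S (K + dd)%nat) by lia.
    assert (Hm : f (S (K + dd)%nat) <= eps * f (K + dd)%nat) by (apply H; lia).
    cbn [sum1].
    pose proof (Hf (S (K + dd)%nat)). pose proof (Hf (K + dd)%nat).
    pose proof (pos_INR (K + dd)%nat).
    set (m := (K + dd)%nat) in *.
    split; [lra|split]. nra. rewrite S_INR. nra.
Qed.

Definition Sy y t := sum1 (w y) t.
Definition My y t := sum1 (fun i => INR i * w y i) t.

Lemma UB t c1 rho y : (1 <= t)%nat -> 0 < c1 -> rho <= INR t - c1 ->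
  (1 + 2 / c1) * 2 ^ (t - 1) * INR t <= exp y -> rho * Sy y t < My y t.
Proof.
  intros Ht Hc Hr He. set (R0 := 1 + 2 / c1).
  assert (HR0 : 1 < R0) by (unfold R0; assert (0 < 2 / c1) by (apply Rdiv_lt_0_compat; lra); lra).
  destruct (G1 (w y) R0 HR0 (w_pos y) t) as [_ H2].
  { intros i Hi. rewrite w_succ.
    assert (P1 : 2 ^ i <= 2 ^ (t - 1)) by (apply Rle_pow; [lra|lia]).
    assert (P2 : INR (S i) <= INR t) by (apply le_INR; lia).
    assert (P3 : 0 < 2 ^ i) by (apply pow_lt; lra).
    assert (P4 : 0 < INR (S i)) by (apply lt_0_INR; lia).
    set (q := exp y / (2 ^ i * INR (S i))).
    assert (Hq : q * (2 ^ i * INR (S i)) = exp y) by (unfold q; field; lra).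
    assert (R0 <= q).
    { assert (R0 * (2 ^ i * INR (S i)) <= q * (2 ^ i * INR (S i))).
      { rewrite Hq. eapply Rle_trans; [|exact He].
        rewrite Rmult_assoc. unfold R0. apply Rmult_le_compat_l; [unfold R0 in HR0; lra|].
        apply Rmult_le_compat; try lra. }
      apply Rmult_le_reg_r in H; [lra|]. apply Rmult_lt_0_compat; lra. }
    pose proof (w_pos y i). nra. }
  assert (HS : 0 < Sy y t).
  { unfold Sy. eapply Rlt_le_trans; [apply (w_pos y t)|].
    apply sum1_ge_last; [intros; left; apply w_pos|lia]. }
  unfold Sy, My in *.
  set (S0 := sum1 (w y) t) in *. set (M0 := sum1 (fun i => INR i * w y i) t) in *.
  assert (E : R0 - 1 = 2 / c1) by (unfold R0; ring). rewrite E in H2.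
  assert (H3 : INR t * S0 - M0 <= c1 * S0 / 2).
  { apply Rmult_le_compat_l with (r := c1 / 2) in H2; [|lra].
    replace (c1 / 2 * (2 / c1 * (INR t * S0 - M0))) with (INR t * S0 - M0) in H2 by (field; lra).
    lra. }
  nra.
Qed.

Lemma LB t k c2 rho y : 0 < c2 -> c2 + 1 <= INR k -> (k + 1 <= t)%nat ->
  INR t - c2 <= rho ->
  exp y <= (1 / (2 + 4 * c2)) * 2 ^ (t - k) * INR (t - k + 1) -> My y t < rho * Sy y t.
Proof.
  intros Hc Hk Ht Hr He. set (K := (t - k)%nat). set (eps := 1 / (2 + 4 * c2)).
  fold K eps in He.
  assert (Heps : 0 < eps < 1) by (unfold eps; split; [apply Rdiv_lt_0_compat; lra|];
    apply (Rmult_lt_reg_r (2 + 4 * c2)); [lra|]; unfold Rdiv; rewrite Rmult_assoc, Rinv_l; lra).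
  assert (Heps2 : eps * (2 + 4 * c2) = 1) by (unfold eps; field; lra).
  destruct (G2 (w y) eps K Heps (w_pos y) k) as [I1 [I2 I3]].
  { intros i Hi. rewrite w_succ.
    assert (P1 : 2 ^ K <= 2 ^ i) by (apply Rle_pow; [lra|lia]).
    assert (P2 : INR (K + 1) <= INR (S i)) by (apply le_INR; lia).
    assert (P3 : 0 < 2 ^ K) by (apply pow_lt; lra).
    assert (P4 : 0 < INR (K + 1)) by (apply lt_0_INR; lia).
    set (q := exp y / (2 ^ i * INR (S i))).
    assert (P5 : 0 < 2 ^ i * INR (S i)) by (apply Rmult_lt_0_compat; [apply pow_lt|apply lt_0_INR]; lia || lra).
    assert (Hq : q * (2 ^ i * INR (S i)) = exp y) by (unfold q; field; lra).
    assert (q <= eps).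
    { assert (q * (2 ^ i * INR (S i)) <= eps * (2 ^ i * INR (S i))).
      { rewrite Hq. eapply Rle_trans; [exact He|].
        rewrite Rmult_assoc. apply Rmult_le_compat_l; [lra|].
        apply Rmult_le_compat; lra. }
      apply Rmult_le_reg_r in H; lra. }
    pose proof (w_pos y i). nra. }
  replace (K + k)%nat with t in * by (unfold K; lia).
  assert (HK1 : (1 <= K)%nat) by (unfold K; lia).
  assert (HSK : w y K <= sum1 (w y) K) by (apply sum1_ge_last; [intros; left; apply w_pos|lia]).
  pose proof (w_pos y K). pose proof (w_pos y t).
  pose proof (sum1_M_le (w y) (fun i => Rlt_le _ _ (w_pos y i)) K) as HMK.
  assert (HKR : INR K = INR t - INR k) by (unfold K; apply minus_INR; lia).
  unfold Sy, My.
  set (SK := sum1 (w y) K) in *. set (St := sum1 (w y) t) in *.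
  set (MK := sum1 (fun i => INR i * w y i) K) in *. set (Mt := sum1 (fun i => INR i * w y i) t) in *.
  set (Dl := St - SK) in *.
  assert (HD : Dl <= 2 * eps * SK) by nra.
  assert (HD2 : c2 * Dl <= SK / 2).
  { assert (c2 * Dl <= c2 * (2 * eps * SK)) by (apply Rmult_le_compat_l; lra). nra. }
  assert (Mt <= INR K * SK + INR t * Dl) by lra.
  assert (INR K * SK <= (INR t - c2 - 1) * SK) by (apply Rmult_le_compat_r; lra).
  assert (HSt : 0 <= St) by (unfold Dl in I1; lra).
  assert ((INR t - c2) * St <= rho * St) by (apply Rmult_le_compat_r; lra).
  assert (INR t * Dl - (INR t - c2) * Dl = c2 * Dl) by ring.
  unfold Dl in *. nra.
Qed.

Lemma cont_w i : continuity (fun y => exp (INR i * y) / d i).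
Proof. pose proof (d_pos i). reg. Qed.

Lemma cont_sum1 (g : nat -> R -> R) : (forall i, continuity (g i)) ->
  forall t, continuity (fun y => sum1 (fun i => g i y) t).
Proof.
  intros H t; induction t; intro x; simpl.
  - apply continuity_pt_const. intros a b; reflexivity.
  - exact (continuity_pt_plus _ _ x (IHt x) (H (S t) x)).
Qed.

Lemma cont_f t rho : continuity (fun y => My y t - rho * Sy y t).
Proof.
  assert (c1 : continuity (fun y => My y t)).
  { apply (cont_sum1 (fun i y => INR i * w y i)). intros i. unfold w.
    pose proof (d_pos i). reg. }
  assert (c2 : continuity (fun y => Sy y t)).
  { apply (cont_sum1 (fun i y => w y i)). intros i. unfold w.
    pose proof (d_pos i). reg. }
  intro x. apply (continuity_pt_minus _ _ x (c1 x)).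
  apply (continuity_pt_scal _ rho x (c2 x)).
Qed.

Lemma exp_pow2 n : exp (INR n * ln 2) = 2 ^ n.
Proof. rewrite <- Rpower_pow by lra. reflexivity. Qed.

Lemma sol_eq t rho p : xy_spec t rho p -> My (snd p) t = rho * Sy (snd p) t.
Proof.
  destruct p as [x y]. unfold xy_spec; simpl. intros [E1 E2].
  rewrite (sum1_ext _ (fun i => exp x * w y i)) in E1
    by (intros; unfold w; rewrite exp_plus; field; apply Rgt_not_eq, d_pos).
  rewrite (sum1_ext _ (fun i => exp x * (INR i * w y i))) in E2
    by (intros; unfold w; rewrite exp_plus; field; apply Rgt_not_eq, d_pos).
  rewrite sum1_scal in E1, E2. unfold My, Sy.
  pose proof (exp_pos x). rewrite <- E2.
  replace (sum1 (fun i : nat => INR i * w y i) t) with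
    (sum1 (fun i : nat => INR i * w y i) t * (exp x * sum1 (w y) t)) at 1 by (rewrite E1; ring).
  ring.
Qed.

Lemma spec_of_y t rho y : My y t = rho * Sy y t -> 0 < Sy y t ->
  xy_spec t rho (- ln (Sy y t), y).
Proof.
  intros E HS. unfold xy_spec; simpl.
  assert (Ex : exp (- ln (Sy y t)) * Sy y t = 1).
  { rewrite exp_Ropp, exp_ln by lra. field. lra. }
  split.
  - rewrite (sum1_ext _ (fun i => exp (- ln (Sy y t)) * w y i))
      by (intros; unfold w; rewrite exp_plus; field; apply Rgt_not_eq, d_pos).
    rewrite sum1_scal. exact Ex.
  - rewrite (sum1_ext _ (fun i => exp (- ln (Sy y t)) * (INR i * w y i)))
      by (intros; unfold w; rewrite exp_plus; field; apply Rgt_not_eq, d_pos).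
    rewrite sum1_scal. fold (My y t). rewrite E.
    replace rho with (rho * (exp (- ln (Sy y t)) * Sy y t)) at 2 by (rewrite Ex; ring). ring.
Qed.

Lemma Sy_pos y t : (1 <= t)%nat -> 0 < Sy y t.
Proof.
  intros. unfold Sy. eapply Rlt_le_trans; [apply (w_pos y t)|].
  apply sum1_ge_last; [intros; left; apply w_pos|lia].
Qed.

Lemma main_bound t k c1 c2 rho : 0 < c1 -> 0 < c2 -> c2 + 1 <= INR k -> (k + 1 <= t)%nat ->
  c1 <= INR t - rho <= c2 ->
  ln (1 / (2 + 4 * c2)) + INR (t - k) * ln 2 + ln (INR (t - k + 1)) < y_t t rho /\
  y_t t rho < ln (1 + 2 / c1) + INR (t - 1) * ln 2 + ln (INR t).
Proof.
  intros Hc1 Hc2 Hk Ht [Hr1 Hr2].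
  set (ylo := ln (1 / (2 + 4 * c2)) + INR (t - k) * ln 2 + ln (INR (t - k + 1))).
  set (yhi := ln (1 + 2 / c1) + INR (t - 1) * ln 2 + ln (INR t)).
  assert (Hlo : forall y, y <= ylo -> My y t < rho * Sy y t).
  { intros y Hy. apply (LB t k c2); try lra; try lia.
    assert (exp ylo = (1 / (2 + 4 * c2)) * 2 ^ (t - k) * INR (t - k + 1)).
    { unfold ylo. rewrite !exp_plus, exp_pow2, !exp_ln. reflexivity.
      apply lt_0_INR; lia. apply Rdiv_lt_0_compat; lra. }
    rewrite <- H. destruct Hy as [Hy|Hy]; [left; apply exp_increasing; lra|right; rewrite Hy; reflexivity]. }
  assert (Hhi : forall y, yhi <= y -> rho * Sy y t < My y t).
  { intros y Hy. apply (UB t c1); try lra; try lia.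
    assert (exp yhi = (1 + 2 / c1) * 2 ^ (t - 1) * INR t).
    { unfold yhi. rewrite !exp_plus, exp_pow2, !exp_ln. reflexivity.
      apply lt_0_INR; lia. assert (0 < 2 / c1) by (apply Rdiv_lt_0_compat; lra). lra. }
    rewrite <- H. destruct Hy as [Hy|Hy]; [left; apply exp_increasing; lra|right; rewrite Hy; reflexivity]. }
  assert (Hex : exists p, xy_spec t rho p).
  { destruct (IVT (fun y => My y t - rho * Sy y t) ylo (Rmax yhi (ylo + 1)) (cont_f t rho))
      as [z [_ Hz]].
    - pose proof (Rmax_r yhi (ylo + 1)). lra.
    - pose proof (Hlo ylo (Rle_refl _)). lra.
    - pose proof (Hhi (Rmax yhi (ylo + 1)) (Rmax_l _ _)). lra.
    - exists (- ln (Sy z t), z). apply spec_of_y; [lra|]. apply Sy_pos; lia. }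
  assert (Hs : xy_spec t rho (xy t rho)).
  { unfold xy. apply epsilon_spec. destruct Hex as [p Hp]. exists p. exact Hp. }
  apply sol_eq in Hs. fold (y_t t rho) in Hs.
  split.
  - destruct (Rlt_or_le ylo (y_t t rho)) as [H|H]; [exact H|].
    specialize (Hlo _ H). lra.
  - destruct (Rlt_or_le (y_t t rho) yhi) as [H|H]; [exact H|].
    specialize (Hhi _ H). lra.
Qed.

Lemma abs_both x : - Rabs x <= x <= Rabs x.
Proof. pose proof (Rle_abs x). pose proof (Rle_abs (- x)). rewrite Rabs_Ropp in H0. lra. Qed.

Lemma ln_le' x y : 0 < x -> x <= y -> ln x <= ln y.
Proof. intros Hx [H|H]; [left; apply ln_increasing; lra|subst; lra]. Qed.

Lemma nat_unbounded r : exists k : nat, r < INR k.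
Proof.
  destruct (archimed r) as [H1 _].
  destruct (Z_lt_le_dec (up r) 0) as [Hz|Hz].
  - exists 0%nat. simpl. apply IZR_lt in Hz. lra.
  - exists (Z.to_nat (up r)). rewrite INR_IZR_INZ, Z2Nat.id by lia. lra.
Qed.

Lemma ln2_bounds : 0 < ln 2 < 1.
Proof.
  pose proof ln_lt_2. split; [lra|].
  rewrite <- (ln_exp 1). apply ln_increasing; [lra|].
  pose proof (exp_ineq1 1). lra.
Qed.

Lemma log_bound L : 1 <= L -> 2 * log2 L <= L + 4 / (ln 2 ^ 2).
Proof.
  intros HL. pose proof ln2_bounds as [l0 l1].
  set (s := sqrt L). assert (Hs : s * s = L) by (apply sqrt_sqrt; lra).
  assert (Hs0 : 0 < s) by (apply sqrt_lt_R0; lra).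
  assert (Hln : ln L = 2 * ln s) by (rewrite <- Hs, ln_mult by lra; ring).
  assert (Hls : ln s <= s - 1).
  { pose proof (exp_ineq1 (ln s)). rewrite exp_ln in H by lra.
    destruct (Req_dec (ln s) 0) as [E|E]; [rewrite E; rewrite <- (exp_ln s), E, exp_0 by lra; lra|]. specialize (H E). lra. }
  unfold log2. rewrite Hln.
  assert (E : 2 * (2 * ln s / ln 2) = 4 * ln s / ln 2) by (field; lra). rewrite E.
  assert (4 * ln s / ln 2 <= 4 * s / ln 2).
  { unfold Rdiv. apply Rmult_le_compat_r. left; apply Rinv_0_lt_compat; lra. lra. }
  assert (4 * s / ln 2 <= s * s + 4 / ln 2 ^ 2).
  { assert (0 <= (s - 2 / ln 2) ^ 2) by apply pow2_ge_0.
    replace ((s - 2 / ln 2) ^ 2) with (s * s + 4 / ln 2 ^ 2 - 4 * s / ln 2) in H0 by (field; lra).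
    lra. }
  lra.
Qed.

Theorem corollary38 (t : nat -> nat) :
  (exists C : R, exists N0 : nat, forall n : nat, (N0 <= n)%nat ->
      Rabs (INR (t n) - alpha0 (INR n)) <= C) ->
  forall c1 c2 : R, 0 < c1 -> c1 <= c2 ->
  exists K : R, exists N : nat, forall n : nat, (N <= n)%nat ->
    forall rho : R, 2 <= rho -> c1 <= INR (t n) - rho <= c2 ->
      Rabs (y_t (t n) rho - (2 * ln (INR n) - ln (ln (INR n)))) <= K.
Proof.
  intros [C [N0 HC]] c1 c2 Hc1 Hc12.
  assert (HC0 : 0 <= C) by (specialize (HC N0 (le_n _)); pose proof (Rabs_pos (INR (t N0) - alpha0 (INR N0))); lra).
  pose proof ln2_bounds as [l0 l1].
  set (l2 := ln 2) in *.
  destruct (nat_unbounded (c2 + 1)) as [k Hk].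
  set (c0 := 2 * log2 (exp 1 / 2) + 1).
  set (D := 4 / l2 ^ 2 + Rabs c0 + C).
  assert (HD0 : 0 <= D).
  { assert (0 < 4 / l2 ^ 2) by (apply Rdiv_lt_0_compat; [lra|apply pow_lt; lra]).
    pose proof (Rabs_pos c0). unfold D; lra. }
  set (Lam := l2 * (2 * D + 4 * INR k + 3) + 1).
  destruct (nat_unbounded (exp Lam)) as [N1 HN1].
  set (eps := 1 / (2 + 4 * c2)). set (R0 := 1 + 2 / c1).
  set (A := 2 / l2 + D). set (B := 1 / (2 * l2)).
  exists ((Rabs (ln eps) + INR k * l2 + l2 + Rabs (ln R0)) + C * l2 + Rabs (ln A) + Rabs (ln B)
          + Rabs (2 * ln l2 + c0 * l2)).
  exists (Nat.max N0 N1). intros n Hn rho _ Hrho.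
  assert (HnN1 : INR N1 <= INR n) by (apply le_INR; lia).
  specialize (HC n ltac:(lia)).
  pose proof (exp_pos Lam) as HeL.
  set (ell := ln (INR n)).
  assert (Hell : Lam < ell).
  { rewrite <- (ln_exp Lam). apply ln_increasing; lra. }
  assert (Hk0 : 0 <= INR k) by apply pos_INR.
  assert (HLam : l2 * (2 * D + 4 * INR k + 3) >= 0) by (apply Rle_ge, Rmult_le_pos; lra).
  assert (Hell1 : 1 < ell) by (unfold Lam in Hell; lra).
  set (L := ell / l2).
  assert (HL : 2 * D + 4 * INR k + 3 < L).
  { unfold L. apply (Rmult_lt_reg_r l2); [lra|]. unfold Rdiv. rewrite Rmult_assoc, Rinv_l by lra.
    unfold Lam in Hell. lra. }
  assert (HL1 : 1 <= L) by lra.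
  assert (Halpha : alpha0 (INR n) = 2 * L - 2 * log2 L + c0) by (unfold alpha0, c0, L, ell; change (log2 (INR n)) with (ln (INR n) / l2); ring).
  pose proof (log_bound L HL1) as Hlb. fold l2 in Hlb.
  assert (Hlog0 : 0 <= log2 L).
  { unfold log2. fold l2. apply Rmult_le_pos; [|left; apply Rinv_0_lt_compat; lra]. rewrite <- ln_1. apply ln_le'; lra. }
  set (T := INR (t n)) in *.
  pose proof (abs_both (T - alpha0 (INR n))) as Hab.
  pose proof (abs_both c0) as Hc0.
  assert (HT1 : L - D <= T) by (unfold D in *; lra).
  assert (0 < 4 / l2 ^ 2) by (apply Rdiv_lt_0_compat; [lra|apply pow_lt; lra]).
  assert (HT2 : T <= 2 * L + D) by (unfold D in *; lra).
  assert (Htk : (k + 1 <= t n)%nat).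
  { apply INR_le. rewrite plus_INR. simpl (INR 1). fold T. lra. }
  assert (Hc2 : 0 < c2) by lra.
  destruct (main_bound (t n) k c1 c2 rho Hc1 Hc2 ltac:(lra) Htk Hrho) as [Ylo Yhi].
  fold eps R0 T in Ylo, Yhi.
  rewrite minus_INR in Ylo, Yhi by lia. rewrite plus_INR, minus_INR in Ylo by lia.
  simpl (INR 1) in Ylo, Yhi. fold T in Ylo, Yhi. fold l2 in Ylo, Yhi.
  set (y := y_t (t n) rho) in *.
  assert (HT0 : 0 < T) by lra.
  assert (HlnK : ln T - l2 <= ln (T - INR k + 1)).
  { replace (ln T) with (ln 2 + ln (T / 2)).
    - fold l2. assert (ln (T / 2) <= ln (T - INR k + 1)) by (apply ln_le'; lra). lra.
    - rewrite <- ln_mult by lra. f_equal. field. }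
  assert (Hell0 : 0 < ell) by lra.
  assert (HlnA : ln T <= ln A + ln ell).
  { rewrite <- ln_mult. apply ln_le'; [lra|].
    - unfold A. replace ((2 / l2 + D) * ell) with (2 * L + D * ell) by (unfold L; field; lra).
      assert (D <= D * ell) by (rewrite <- (Rmult_1_r D) at 1; apply Rmult_le_compat_l; lra). lra.
    - unfold A. assert (0 < 2 / l2) by (apply Rdiv_lt_0_compat; lra). lra.
    - lra. }
  assert (HlnB : ln B + ln ell <= ln T).
  { rewrite <- ln_mult. apply ln_le'.
    - unfold B. apply Rmult_lt_0_compat; [apply Rdiv_lt_0_compat|]; lra.
    - unfold B. replace (1 / (2 * l2) * ell) with (L / 2) by (unfold L; field; lra). lra.
    - unfold B. apply Rdiv_lt_0_compat; lra.
    - lra. }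
  assert (HlnL : ln L = ln ell - ln l2).
  { unfold L, Rdiv. rewrite ln_mult, ln_Rinv by (try apply Rinv_0_lt_compat; lra). ring. }
  assert (Hal2 : alpha0 (INR n) * l2 = 2 * ell - 2 * ln ell + 2 * ln l2 + c0 * l2).
  { rewrite Halpha. unfold log2. fold l2. rewrite HlnL. unfold L. field. lra. }
  assert (Hprod : - C * l2 <= (T - alpha0 (INR n)) * l2 <= C * l2).
  { split; apply Rmult_le_compat_r; lra. }
  fold ell. apply Rabs_le.
  pose proof (abs_both (ln eps)). pose proof (abs_both (ln R0)).
  pose proof (abs_both (ln A)). pose proof (abs_both (ln B)).
  pose proof (abs_both (2 * ln l2 + c0 * l2)).
  assert (TL : T * l2 = (T - alpha0 (INR n)) * l2 + alpha0 (INR n) * l2) by ring.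
  assert (TK : (T - INR k) * l2 = T * l2 - INR k * l2) by ring.
  assert (T1 : (T - 1) * l2 = T * l2 - l2) by ring.
  rewrite TK in Ylo. rewrite T1 in Yhi. assert (0 <= INR k * l2) by (apply Rmult_le_pos; lra). split; lra.
Qed.
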